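(* Let $G$ and $H$ be finite AC-groups such that $B_G(t)=B_H(t)$. Then $k(G)=k(H)$, where $k(\cdot)$ denotes the number of conjugacy classes.
   Context: A finite group $G$ is an AC-group if the centralizer of every non-central element is abelian. For a finite group $G$ and $n\ge0$, let $G^{(n)}\subseteq G^n$ be the set of $n$-tuples of pairwise commuting elements, on which $G$ acts by simultaneous conjugation; let $\beta_{G,n}$ be the number of orbits and $B_G(t)=\sum_{n\ge0}\beta_{G,n}t^n$. *)

(* Defs.v *)
From mathcomp Require Import all_boot all_fingroup all_solvable.
Set Implicit Arguments. Unset Strict Implicit. Unset Printing Implicit Defensive.
Local Open Scope group_scope.

Definition AC_group (gT : finGroupType) (G : {group gT}) : Prop :=
  forall x, x \in G -> x \notin 'Z(G) -> abelian 'C_G[x].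

Definition comm_tuples (gT : finGroupType) (G : {group gT}) (n : nat)
  : {set {ffun 'I_n -> gT}} :=
  [set t : {ffun 'I_n -> gT} |
     [forall i, t i \in G] && [forall i, forall j, t i * t j == t j * t i]].

Definition sim_conj_orbit (gT : finGroupType) (G : {group gT}) (n : nat)
  (t : {ffun 'I_n -> gT}) : {set {ffun 'I_n -> gT}} :=
  [set [ffun i => t i ^ g] | g in G].

Definition beta (gT : finGroupType) (G : {group gT}) (n : nat) : nat :=
  #|[set sim_conj_orbit G t | t in comm_tuples G n]|.

Definition kclasses (gT : finGroupType) (G : {group gT}) : nat := #|classes G|.

(* Main.v *)
Require Import Defs.
From mathcomp Require Import all_boot all_fingroup all_solvable.
Set Implicit Arguments. Unset Strict Implicit. Unset Printing Implicit Defensive.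
Local Open Scope group_scope.

Section B1.
Variables (gT : finGroupType) (G : {group gT}).
Let f (x : gT) : {ffun 'I_1 -> gT} := [ffun _ => x].

Lemma f_inj : injective f.
Proof. by move=> x y /ffunP /(_ ord0); rewrite !ffunE. Qed.

Lemma ct1 : comm_tuples G 1 = f @: G.
Proof.
apply/setP => t; rewrite inE; apply/andP/imsetP.
  case=> /forallP H1 _; exists (t ord0) => //.
  by apply/ffunP => i; rewrite ffunE (ord1 i).
case=> x xG ->; split; apply/forallP => i; rewrite ?ffunE //.
by apply/forallP => j; rewrite !ffunE.
Qed.

Lemma orb1 x : sim_conj_orbit G (f x) = f @: (x ^: G).
Proof.
rewrite /sim_conj_orbit /f; apply/setP => t; apply/imsetP/imsetP.
  case=> g gG ->; exists (x ^ g); first by apply/imsetP; exists g.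
  by apply/ffunP => i; rewrite !ffunE.
case=> y /imsetP [g gG ->] ->; exists g => //.
by apply/ffunP => i; rewrite !ffunE.
Qed.

Lemma beta1 : beta G 1 = kclasses G.
Proof.
rewrite /beta /kclasses ct1 -imset_comp.
have -> : [set (@sim_conj_orbit _ G 1 \o f) x | x in G] =
          [set (fun A : {set gT} => f @: A) (x ^: G) | x in G].
  by apply: eq_imset => x /=; rewrite orb1.
rewrite (imset_comp (fun A : {set gT} => f @: A) (fun x => x ^: G)).
by rewrite card_imset //; apply: imset_inj; apply: f_inj.
Qed.
End B1.

(* B_G(t) = B_H(t) as formal power series, i.e. beta_{G,n} = beta_{H,n} for all n *)
Theorem lemma6p4 (gT hT : finGroupType) (G : {group gT}) (H : {group hT}) :
  AC_group G -> AC_group H ->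
  (forall n : nat, beta G n = beta H n) ->
  kclasses G = kclasses H.
Proof.
by move=> _ _ hb; rewrite -!beta1 hb.
Qed.
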